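(* Let $d\ge2$, $\delta\in[0,1/d]$, and let $N$ be a $\delta$-upper bounded matrix of dimension $d\times d$. Then $$\inf_{x\in\mathbb{R}^d,\ \|x\|_\infty=1}\|N x\|_\infty\ \ge\ \frac{1-d\delta}{d-1}.$$
   Context: A $d\times d$ matrix $N$ is $\delta$-upper bounded if it is stochastic (non-negative entries, rows summing to $1$), $N_{i,i}\ge1-(d-1)\delta$ for all $i$, and $N_{i,j}\le\delta$ for all $i\ne j$. Here $\|\cdot\|_\infty$ is the maximum norm on $\mathbb{R}^d$. *)

(* Defs.v *)
From mathcomp Require Import all_boot all_order all_algebra.
Set Implicit Arguments. Unset Strict Implicit. Unset Printing Implicit Defensive.
Import Order.TTheory GRing.Theory Num.Theory.
Local Open Scope ring_scope.

Definition maxnorm (R : realFieldType) (d : nat) (x : 'cV[R]_d) : R :=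
  \big[Num.max/0]_(i < d) `|x i 0|.

Definition upper_bounded (R : realFieldType) (d : nat) (delta : R) (N : 'M[R]_d) : Prop :=
  [/\ (forall i j, 0 <= N i j),
      (forall i, \sum_(j < d) N i j = 1),
      (forall i, 1 - (d%:R - 1) * delta <= N i i) &
      (forall i j, i != j -> N i j <= delta)].

(* Main.v *)
Require Import Defs.
From mathcomp Require Import all_boot all_order all_algebra.
From mathcomp Require Import ring lra.
Import Order.TTheory GRing.Theory Num.Theory.
Local Open Scope ring_scope.

Lemma maxnorm_ge (R : realFieldType) (d : nat) (x : 'cV[R]_d) k :
  `|x k 0| <= maxnorm x.
Proof. by rewrite /maxnorm (bigD1 k) //= le_max lexx. Qed.

Lemma maxnorm_att (R : realFieldType) (d : nat) (x : 'cV[R]_d) :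
  maxnorm x != 0 -> exists k, maxnorm x = `|x k 0|.
Proof.
rewrite /maxnorm; elim/big_rec: _ => [|k r _ IH]; first by rewrite eqxx.
rewrite /Num.max /Order.max; case: ifP => _ H; first exact: IH.
by exists k.
Qed.

Lemma maxnormN (R : realFieldType) (d : nat) (x : 'cV[R]_d) :
  maxnorm (- x) = maxnorm x.
Proof. by rewrite /maxnorm; apply: eq_bigr => i _; rewrite mxE normrN. Qed.

Lemma core (R : realFieldType) (d : nat) (delta : R) (N : 'M[R]_d) :
  (2 <= d)%N -> 0 <= delta -> delta <= d%:R^-1 ->
  upper_bounded delta N ->
  forall (x : 'cV[R]_d) i, x i 0 = 1 -> (forall j, `|x j 0| <= 1) ->
    (1 - d%:R * delta) / (d%:R - 1) <= maxnorm (N *m x).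
Proof.
move=> d2 d0 dle [Nge Nsum Ndiag Noff] x i xi xle.
have dpos : 0 < (d%:R : R) by rewrite ltr0n; case: d d2 {N Nge Nsum Ndiag Noff x i xi xle dle}.
have d1 : 1 <= (d%:R : R) - 1.
  have : (2%:R : R) <= d%:R by rewrite ler_nat.
  by move=> h; lra.
have c0 : 0 <= 1 - d%:R * delta.
  have : d%:R * delta <= d%:R * d%:R^-1 by rewrite ler_wpM2l // ltW.
  by rewrite mulfV ?gt_eqF //; lra.
set c := 1 - d%:R * delta.
set s := \sum_j x j 0.
have rowsum : forall k, \sum_j (N k j - delta) = c.
  move=> k; rewrite sumrB Nsum sumr_const card_ord /c.
  by rewrite mulr_natl.
have yE : forall k, (N *m x) k 0 - delta * s = \sum_j (N k j - delta) * x j 0.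
  move=> k; rewrite mxE /s mulr_sumr -sumrB; apply: eq_bigr => j _; by rewrite mulrBl.
case: (@arg_minP _ R _ i (fun _ => true) (fun j => x j 0) isT) => m _ Hm.
have yi : c + delta * s <= (N *m x) i 0.
  suff : c <= (N *m x) i 0 - delta * s by lra.
  rewrite yE -(rowsum i); apply: ler_sum => j _.
  case: (eqVneq i j) => [<-|ij]; first by rewrite xi mulr1.
  have := Noff _ _ ij; have := xle j; rewrite ler_norml => /andP[_ h1] h2.
  rewrite -subr_ge0; have -> : (N i j - delta) * x j 0 - (N i j - delta) =
    (delta - N i j) * (1 - x j 0) by ring.
  by apply: mulr_ge0; lra.
have ym : (N *m x) m 0 <= c * x m 0 + delta * s.
  suff : (N *m x) m 0 - delta * s <= c * x m 0 by lra.
  rewrite yE -(rowsum m) mulr_suml; apply: ler_sum => j _.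
  case: (eqVneq m j) => [<-|mj]; first by [].
  have := Noff _ _ mj; have := Hm j isT => h1 h2.
  rewrite -subr_ge0; have -> : (N m j - delta) * x m 0 - (N m j - delta) * x j 0 =
    (delta - N m j) * (x j 0 - x m 0) by ring.
  by apply: mulr_ge0; lra.
have sge : 1 + (d%:R - 1) * x m 0 <= s.
  have : 1 - x m 0 <= \sum_j (x j 0 - x m 0).
    rewrite (bigD1 i) //= xi lerDl; apply: sumr_ge0 => j _.
    by rewrite subr_ge0 Hm.
  rewrite sumrB sumr_const card_ord -mulr_natl -/s mulrBl mul1r; lra.
have Mi : (N *m x) i 0 <= maxnorm (N *m x).
  by apply: le_trans (@maxnorm_ge _ _ _ i); rewrite ler_norm.
have Mm : - (N *m x) m 0 <= maxnorm (N *m x).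
  by apply: le_trans (@maxnorm_ge _ _ _ m); rewrite -normrN ler_norm.
rewrite ler_pdivrMr; last lra.
have xm1 : -1 <= x m 0 by have := xle m; rewrite ler_norml => /andP[].
set M := maxnorm (N *m x) in Mi Mm *.
have dd : 0 <= (d%:R : R) - 1 by lra.
case: (lerP 0 s) => hs.
  have : 0 <= delta * s by apply: mulr_ge0.
  move=> h; have hM : c <= M by lra.
  apply: (@le_trans _ _ (c * (d%:R - 1))); first by rewrite ler_peMr.
  by rewrite ler_wpM2r.
have : c * (1 + (d%:R - 1) * x m 0) <= 0.
  by apply: mulr_ge0_le0 => //; lra.
have : 0 <= delta * - s by apply: mulr_ge0 => //; lra.
move=> h1 h2; have hM : - (c * x m 0) <= M by rewrite mulrN in h1; lra.
apply: (@le_trans _ _ (- (c * x m 0) * (d%:R - 1))); last by rewrite ler_wpM2r.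
have -> : - (c * x m 0) * (d%:R - 1) = c - c * (1 + (d%:R - 1) * x m 0) by ring.
lra.
Qed.

Theorem lemma13 (R : realFieldType) (d : nat) (delta : R) (N : 'M[R]_d) :
  (2 <= d)%N -> 0 <= delta -> delta <= d%:R^-1 ->
  upper_bounded delta N ->
  forall x : 'cV[R]_d, maxnorm x = 1 ->
    (1 - d%:R * delta) / (d%:R - 1) <= maxnorm (N *m x).
Proof.
move=> d2 d0 dle HN x xn.
have [k hk] : exists k, maxnorm x = `|x k 0| by apply: maxnorm_att; rewrite xn oner_neq0.
have xle : forall j, `|x j 0| <= 1 by move=> j; rewrite -xn maxnorm_ge.
have : `|x k 0| = 1 by rewrite -hk.
move/eqP; rewrite eqr_norml => /andP[/orP[] /eqP h _].
  exact: core d2 d0 dle HN x k h xle.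
rewrite -maxnormN -mulmxN.
have h1 : (- x) k 0 = 1 by rewrite mxE h opprK.
have h2 : forall j, `|(- x) j 0| <= 1 by move=> j; rewrite mxE normrN.
exact: (@core R d delta N d2 d0 dle HN (- x) k h1 h2).
Qed.
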